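(* The finite difference scheme \[ -F^e[u]=A^+\left(\lvert\nabla u^h\rvert^+,-\Delta_1^eu\right)+A^-\left(-\lvert\nabla u^h\rvert^-,-\Delta_1^eu\right) \] on the uniform two-dimensional grid is elliptic.
   Context: $A(p,q)=(p^2q)^{1/3}$ (real cube root), $A^\pm(p,q)=A(p^\pm,q^\pm)$, $x^+=\max(x,0)$, $x^-=\min(x,0)$. Grid spacing $h$. One-sided differences: $D^-_xu=\frac{u(x,y)-u(x-h,y)}h$, $-D^+_xu=\frac{u(x,y)-u(x+h,y)}h$ and similarly in $y$; $\lvert u_x^h\rvert^+=\max\{-D^+_xu,D^-_xu,0\}$, $\lvert u_x^h\rvert^-=-\min\{-D^+_xu,D^-_xu,0\}$, similarly $\lvert u_y^h\rvert^\pm$; $\lvert\nabla u^h\rvert^\pm=\sqrt{(\lvert u_x^h\rvert^\pm)^2+(\lvert u_y^h\rvert^\pm)^2}$. Median scheme: fix a stencil width $n_\theta$ and $n_S$ neighbours $(x_i,y_i)$, $i=1,\dots,n_S$, of $(x,y)$, with $d\theta=2\pi/n_S$, chosen as grid points with $(x_{i+1},y_{i+1})-(x,y)=h\,n_\theta(\cos(i\,d\theta),\sin(i\,d\theta))+(e_i,f_i)$, $\lvert e_i\rvert,\lvert f_i\rvert\le h$; with $u_i=u(x_i,y_i)$, $\Delta_1^eu(x,y)=2\dfrac{\operatorname{median}_{i=1,\dots,n_S}u_i-u(x,y)}{(h\,n_\theta)^2}$. A finite difference operator $F^h[u](x)=F^h(x,u(x),u(x)-u(\cdot))$ is elliptic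 if $r\le s$, $v(\cdot)\le w(\cdot)$ imply $F^h(x,r,v(\cdot))\le F^h(x,s,w(\cdot))$. *)

(* Defs.v *)
From Stdlib Require Import Reals Lra ZArith List.
Open Scope R_scope.

(** Grid points are indexed by Z*Z; the point (i,j) is (x,y) = (h i, h j).
    A grid function is u : Z*Z -> R. *)
Definition point := (Z * Z)%type.
Definition gridfun := point -> R.

Definition padd (p q : point) : point := ((fst p + fst q)%Z, (snd p + snd q)%Z).
Definition peqb (p q : point) : bool := (Z.eqb (fst p) (fst q) && Z.eqb (snd p) (snd q))%bool.

Definition cbrt (t : R) : R :=
  if Rlt_dec 0 t then Rpower t (1/3)
  else if Rlt_dec t 0 then - Rpower (- t) (1/3) else 0.

Definition xpos (x : R) : R := Rmax x 0.
Definition xneg (x : R) : R := Rmin x 0.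
Definition Afun (p q : R) : R := cbrt (p ^ 2 * q).
Definition Aplus (p q : R) : R := Afun (xpos p) (xpos q).
Definition Aminus (p q : R) : R := Afun (xneg p) (xneg q).

Section Diff.
Variable h : R.
Variable u : gridfun.

Definition Dxm (p : point) : R := (u p - u (padd p ((-1)%Z, 0%Z))) / h.
Definition mDxp (p : point) : R := (u p - u (padd p (1%Z, 0%Z))) / h.
Definition Dym (p : point) : R := (u p - u (padd p (0%Z, (-1)%Z))) / h.
Definition mDyp (p : point) : R := (u p - u (padd p (0%Z, 1%Z))) / h.

Definition absux_plus (p : point) : R := Rmax (Rmax (mDxp p) (Dxm p)) 0.
Definition absux_minus (p : point) : R := - Rmin (Rmin (mDxp p) (Dxm p)) 0.
Definition absuy_plus (p : point) : R := Rmax (Rmax (mDyp p) (Dym p)) 0.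
Definition absuy_minus (p : point) : R := - Rmin (Rmin (mDyp p) (Dym p)) 0.

Definition grad_plus (p : point) : R := sqrt (absux_plus p ^ 2 + absuy_plus p ^ 2).
Definition grad_minus (p : point) : R := sqrt (absux_minus p ^ 2 + absuy_minus p ^ 2).
End Diff.

Fixpoint rinsert (x : R) (l : list R) : list R :=
  match l with
  | nil => x :: nil
  | y :: l' => if Rle_dec x y then x :: y :: l' else y :: rinsert x l'
  end.
Fixpoint rsort (l : list R) : list R :=
  match l with nil => nil | x :: l' => rinsert x (rsort l') end.
Definition median (l : list R) : R :=
  let s := rsort l in
  let n := length l in
  if Nat.even n then (nth (Nat.div2 n - 1) s 0 + nth (Nat.div2 n) s 0) / 2
  else nth (Nat.div2 n) s 0.

(** Valid median stencil: n_S integer offsets (a_k,b_k), k = 0..n_S-1 (the paper's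
    neighbour k+1), with h*(a_k,b_k) = h n_theta (cos(k dtheta), sin(k dtheta)) + (e,f),
    |e|,|f| <= h, dtheta = 2 pi / n_S. *)
Definition valid_stencil (ntheta nS : nat) (st : list point) : Prop :=
  length st = nS /\
  forall k : nat, (k < nS)%nat ->
    Rabs (IZR (fst (nth k st (0%Z, 0%Z))) - INR ntheta * cos (INR k * (2 * PI / INR nS))) <= 1 /\
    Rabs (IZR (snd (nth k st (0%Z, 0%Z))) - INR ntheta * sin (INR k * (2 * PI / INR nS))) <= 1.

Definition Delta1e (h : R) (ntheta : nat) (st : list point) (u : gridfun) (p : point) : R :=
  2 * (median (map (fun o => u (padd p o)) st) - u p) / (h * INR ntheta) ^ 2.

Definition scheme_e (h : R) (ntheta : nat) (st : list point) (u : gridfun) (p : point) : R :=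
  Aplus (grad_plus h u p) (- Delta1e h ntheta st u p)
  + Aminus (- grad_minus h u p) (- Delta1e h ntheta st u p).

(** Writing a finite difference operator G[u](x) in the form F(x, u(x), u(x) - u(.)):
    F(x, r, v) := G[u_{r,v}](x) where u_{r,v}(x) = r and u_{r,v}(y) = r - v(y), y <> x.
    (Then G[u](x) = F(x, u(x), u(x)-u(.)) for every u.) *)
Definition diff_form (G : gridfun -> point -> R) (x : point) (r : R) (v : gridfun) : R :=
  G (fun y => if peqb y x then r else r - v y) x.

Definition elliptic (F : point -> R -> gridfun -> R) : Prop :=
  forall (x : point) (r s : R) (v w : gridfun),
    r <= s -> (forall y, v y <= w y) -> F x r v <= F x s w.

(* Main.v *)
Require Import Defs.
From Stdlib Require Import Reals ZArith List Lra Lia.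
Open Scope R_scope.

Lemma Rpower_pos' x y : 0 < Rpower x y.
Proof. unfold Rpower. apply exp_pos. Qed.

Lemma cbrt_mono a b : a <= b -> cbrt a <= cbrt b.
Proof.
  intros H. unfold cbrt.
  destruct (Rlt_dec 0 a); destruct (Rlt_dec 0 b).
  - apply Rle_Rpower_l; lra.
  - lra.
  - destruct (Rlt_dec a 0).
    + pose proof (Rpower_pos' (-a) (1/3)); pose proof (Rpower_pos' b (1/3)); lra.
    + pose proof (Rpower_pos' b (1/3)); lra.
  - destruct (Rlt_dec a 0); destruct (Rlt_dec b 0).
    + assert (Rpower (-b) (1/3) <= Rpower (-a) (1/3)) by (apply Rle_Rpower_l; lra). lra.
    + pose proof (Rpower_pos' (-a) (1/3)); lra.
    + lra.
    + lra.
Qed.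

Lemma Rmax_le_compat a b c d : a <= b -> c <= d -> Rmax a c <= Rmax b d.
Proof. intros. apply Rmax_lub. apply Rle_trans with b; auto; apply Rmax_l.
  apply Rle_trans with d; auto; apply Rmax_r. Qed.

Lemma Aplus_mono p q p' q' : p <= p' -> q <= q' -> Aplus p q <= Aplus p' q'.
Proof.
  intros H1 H2. unfold Aplus, Afun, xpos. apply cbrt_mono.
  assert (0 <= Rmax p 0 <= Rmax p' 0) by (split; [apply Rmax_r|apply Rmax_le_compat; lra]).
  assert (0 <= Rmax q 0 <= Rmax q' 0) by (split; [apply Rmax_r|apply Rmax_le_compat; lra]).
  simpl. set (a:=Rmax p 0) in *. set (b:=Rmax p' 0) in *.
  set (c:=Rmax q 0) in *. set (d:=Rmax q' 0) in *.
  assert (a*(a*1) <= b*(b*1)) by nra.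
  assert (0 <= a*(a*1)) by nra.
  nra.
Qed.

Lemma Aminus_mono p q p' q' : p <= p' -> q <= q' -> Aminus p q <= Aminus p' q'.
Proof.
  intros H1 H2. unfold Aminus, Afun, xneg. apply cbrt_mono.
  assert (Rmin p 0 <= Rmin p' 0 <= 0) by (split; [apply Rle_min_compat_r; lra|apply Rmin_r]).
  assert (Rmin q 0 <= Rmin q' 0 <= 0) by (split; [apply Rle_min_compat_r; lra|apply Rmin_r]).
  simpl. set (a:=Rmin p 0) in *. set (b:=Rmin p' 0) in *.
  set (c:=Rmin q 0) in *. set (d:=Rmin q' 0) in *.
  assert (b*(b*1) <= a*(a*1)) by nra.
  assert (0 <= b*(b*1)) by nra.
  nra.
Qed.

Fixpoint srt (l : list R) : Prop :=
  match l with
  | nil => True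
  | x :: l' => (match l' with nil => True | y :: _ => x <= y end) /\ srt l'
  end.

Lemma rinsert_head x l : forall y, srt (y :: l) -> y <= x ->
  srt (y :: rinsert x l).
Proof.
  induction l as [|a l IH]; intros y Hs Hyx; simpl in *.
  - tauto.
  - destruct (Rle_dec x a); simpl.
    + destruct Hs as [Hya Hs]. repeat split; try lra; tauto.
    + destruct Hs as [Hya Hs]. split; [lra|]. apply IH; [exact Hs|lra].
Qed.

Lemma rinsert_srt x l : srt l -> srt (rinsert x l).
Proof.
  destruct l as [|a l]; simpl; intros Hs.
  - tauto.
  - destruct (Rle_dec x a); simpl.
    + split; [lra|]. exact Hs.
    + apply (rinsert_head x l a Hs). lra.
Qed.

Lemma rsort_srt l : srt (rsort l).
Proof. induction l; simpl; [tauto|]. apply rinsert_srt; auto. Qed.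

Lemma rinsert_len x l : length (rinsert x l) = S (length l).
Proof. induction l; simpl; auto. destruct (Rle_dec x a); simpl; auto. Qed.

Lemma rsort_len l : length (rsort l) = length l.
Proof. induction l; simpl; auto. rewrite rinsert_len; auto. Qed.

Lemma rinsert_sorted_cons a l : srt (a :: l) -> rinsert a l = a :: l.
Proof.
  destruct l as [|b l]; simpl; auto. intros [H _].
  destruct (Rle_dec a b); auto; lra.
Qed.

Lemma srt_tail a l : srt (a :: l) -> srt l.
Proof. simpl; tauto. Qed.

Lemma rinsert_mono c : forall s1 s2 x y,
  srt s1 -> srt s2 -> Forall2 (fun a b => a <= b + c) s1 s2 -> x <= y + c ->
  Forall2 (fun a b => a <= b + c) (rinsert x s1) (rinsert y s2).
Proof.
  induction s1 as [|a s1 IH]; intros s2 x y H1 H2 HF Hxy; inversion HF; subst; simpl.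
  - constructor; auto.
  - rename y0 into b. rename l' into s2.
    destruct (Rle_dec x a); destruct (Rle_dec y b).
    + constructor; auto.
    + constructor; [lra|].
      rewrite <- (rinsert_sorted_cons a s1 H1).
      apply IH; auto. exact (srt_tail _ _ H1). exact (srt_tail _ _ H2). lra.
    + constructor; [lra|].
      rewrite <- (rinsert_sorted_cons b s2 H2).
      apply IH; auto. exact (srt_tail _ _ H1). exact (srt_tail _ _ H2). lra.
    + constructor; [lra|]. apply IH; auto.
      exact (srt_tail _ _ H1). exact (srt_tail _ _ H2).
Qed.

Lemma rsort_mono c : forall l1 l2, 0 <= c \/ True ->
  Forall2 (fun a b => a <= b + c) l1 l2 ->
  Forall2 (fun a b => a <= b + c) (rsort l1) (rsort l2).
Proof.
  intros l1 l2 _ HF. induction HF; simpl.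
  - constructor.
  - apply rinsert_mono; auto; apply rsort_srt.
Qed.

Lemma Forall2_nth (P : R -> R -> Prop) : forall s1 s2 k,
  Forall2 P s1 s2 -> (k < length s1)%nat -> P (nth k s1 0) (nth k s2 0).
Proof.
  intros s1 s2 k HF. revert k. induction HF; intros k Hk; simpl in *.
  - lia.
  - destruct k; auto. apply IHHF. lia.
Qed.

Lemma Forall2_len (P : R -> R -> Prop) s1 s2 : Forall2 P s1 s2 -> length s1 = length s2.
Proof. induction 1; simpl; auto. Qed.

Lemma median_mono c l1 l2 : (0 < length l1)%nat ->
  Forall2 (fun a b => a <= b + c) l1 l2 -> median l1 <= median l2 + c.
Proof.
  intros Hn HF. unfold median.
  pose proof (Forall2_len _ _ _ HF) as HL. rewrite <- HL.
  pose proof (rsort_mono c l1 l2 (or_intror I) HF) as HS.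
  assert (Hd : (Nat.div2 (length l1) < length (rsort l1))%nat).
  { rewrite rsort_len. apply Nat.lt_div2. lia. }
  pose proof (Forall2_nth _ _ _ _ HS Hd).
  destruct (Nat.even (length l1)).
  - assert (Hd' : (Nat.div2 (length l1) - 1 < length (rsort l1))%nat) by (eapply Nat.le_lt_trans; [apply Nat.le_sub_l|exact Hd]).
    pose proof (Forall2_nth _ _ _ _ HS Hd'). cbv beta in *. lra.
  - auto.
Qed.

Lemma peqb_refl x : peqb x x = true.
Proof. unfold peqb. rewrite !Z.eqb_refl. reflexivity. Qed.

Lemma peqb_off x a b : (a <> 0 \/ b <> 0)%Z -> peqb (padd x (a, b)) x = false.
Proof.
  intros H. unfold peqb, padd; simpl.
  destruct (Z.eqb_spec (fst x + a) (fst x)); destruct (Z.eqb_spec (snd x + b) (snd x));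
  simpl; auto; lia.
Qed.

Section Main.
Variables (h : R) (x : point) (r : R) (v : gridfun).
Definition U : gridfun := fun y => if peqb y x then r else r - v y.

Lemma Udiff a b : (a <> 0 \/ b <> 0)%Z ->
  (U x - U (padd x (a, b))) / h = v (padd x (a, b)) / h.
Proof.
  intros H. unfold U. rewrite peqb_refl, peqb_off by auto. f_equal. ring.
Qed.
End Main.

Lemma div_mono h a b : 0 < h -> a <= b -> a / h <= b / h.
Proof. intros. unfold Rdiv. apply Rmult_le_compat_r; auto. left; apply Rinv_0_lt_compat; auto. Qed.

Theorem mainTheorem14 :
  forall (h : R) (ntheta nS : nat) (st : list point),
    0 < h -> (0 < ntheta)%nat -> (0 < nS)%nat ->
    valid_stencil ntheta nS st ->
    elliptic (diff_form (scheme_e h ntheta st)).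
Proof.
  intros h nt nS st Hh Hnt HnS [Hlen _] x r s v w Hrs Hvw.
  unfold diff_form, scheme_e.
  change (fun y => if peqb y x then r else r - v y) with (U x r v).
  change (fun y => if peqb y x then s else s - w y) with (U x s w).
  assert (Hx1 : (mDxp h (U x r v) x <= mDxp h (U x s w) x /\ Dxm h (U x r v) x <= Dxm h (U x s w) x /\
                 mDyp h (U x r v) x <= mDyp h (U x s w) x /\ Dym h (U x r v) x <= Dym h (U x s w) x)).
  { unfold mDxp, Dxm, mDyp, Dym. rewrite !Udiff by lia.
    repeat split; apply div_mono; auto. }
  destruct Hx1 as [H1 [H2 [H3 H4]]].
  assert (Gp : grad_plus h (U x r v) x <= grad_plus h (U x s w) x).
  { unfold grad_plus, absux_plus, absuy_plus. apply sqrt_le_1_alt.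
    assert (0 <= Rmax (Rmax (mDxp h (U x r v) x) (Dxm h (U x r v) x)) 0 <=
                 Rmax (Rmax (mDxp h (U x s w) x) (Dxm h (U x s w) x)) 0).
    { split; [apply Rmax_r|]. apply Rmax_le_compat; [|lra]. apply Rmax_le_compat; auto. }
    assert (0 <= Rmax (Rmax (mDyp h (U x r v) x) (Dym h (U x r v) x)) 0 <=
                 Rmax (Rmax (mDyp h (U x s w) x) (Dym h (U x s w) x)) 0).
    { split; [apply Rmax_r|]. apply Rmax_le_compat; [|lra]. apply Rmax_le_compat; auto. }
    simpl. nra. }
  assert (Gm : grad_minus h (U x s w) x <= grad_minus h (U x r v) x).
  { unfold grad_minus, absux_minus, absuy_minus. apply sqrt_le_1_alt.
    assert (Rmin (Rmin (mDxp h (U x r v) x) (Dxm h (U x r v) x)) 0 <=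
                 Rmin (Rmin (mDxp h (U x s w) x) (Dxm h (U x s w) x)) 0 <= 0).
    { split; [|apply Rmin_r]. apply Rle_min_compat_r. apply Rmin_glb.
      - apply Rle_trans with (mDxp h (U x r v) x); [apply Rmin_l|auto].
      - apply Rle_trans with (Dxm h (U x r v) x); [apply Rmin_r|auto]. }
    assert (Rmin (Rmin (mDyp h (U x r v) x) (Dym h (U x r v) x)) 0 <=
                 Rmin (Rmin (mDyp h (U x s w) x) (Dym h (U x s w) x)) 0 <= 0).
    { split; [|apply Rmin_r]. apply Rle_min_compat_r. apply Rmin_glb.
      - apply Rle_trans with (mDyp h (U x r v) x); [apply Rmin_l|auto].
      - apply Rle_trans with (Dym h (U x r v) x); [apply Rmin_r|auto]. }
    simpl. nra. }
  assert (Dl : - Delta1e h nt st (U x r v) x <= - Delta1e h nt st (U x s w) x).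
  { unfold Delta1e. unfold U at 2 4. rewrite !peqb_refl.
    assert (HM : median (map (fun o => U x s w (padd x o)) st) <=
                 median (map (fun o => U x r v (padd x o)) st) + (s - r)).
    { apply median_mono.
      - rewrite length_map. lia.
      - clear Hlen. induction st as [|o st IH]; simpl; constructor; auto.
        unfold U. destruct (peqb (padd x o) x).
        + lra.
        + specialize (Hvw (padd x o)). lra. }
    assert (0 < (h * INR nt) ^ 2).
    { apply pow_lt. apply Rmult_lt_0_compat; auto. apply lt_0_INR; auto. }
    set (q := (h * INR nt) ^ 2) in *.
    unfold Rdiv. apply Ropp_le_contravar.
    apply Rmult_le_compat_r; [left; apply Rinv_0_lt_compat; auto|]. lra. }
  apply Rplus_le_compat.
  - apply Aplus_mono; auto.
  - apply Aminus_mono; lra.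
Qed.
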